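(* Let $A\in\{0,1,-1\}^{m\times n}$ be such that $G_A$ is a $t$-left-regular $(\gamma,\mu)$-unique expander, and let $s_{\max}$ be the maximum degree of a right vertex of $G_A$. Then for any $p\ge1$, $\delta_1>0$, $\delta_2\in(0,1)$, and every $\gamma n$-sparse $x\in\mathbb{R}^n$, $$\|Ax\|_p^p\ge\left(\frac{t(1-\mu)}{(1+\delta_1)^{p-1}}-\frac{\mu t}{\delta_1^{p-1}}(s_{\max}-1)^{p-1}\right)\|x\|_p^p,$$ $$\|Ax\|_p^p\le\left(\frac{t}{(1-\delta_2)^{p-1}}+\frac{\mu t}{\delta_2^{p-1}}(s_{\max}-1)^{p-1}\right)\|x\|_p^p.$$
   Context: $G_A=(V_L=[n],V_R=[m],E)$ is the bipartite graph with an edge $\{u,r\}$ iff $A_{r,u}\ne0$. It is a $t$-left-regular $(\gamma,\mu)$-unique expander if every left vertex has degree $t$ and every $S\subseteq V_L$ with $|S|\le\gamma n$ has at least $t(1-\mu)|S|$ right vertices with exactly one neighbor in $S$. A vector is $k$-sparse if it has at most $k$ nonzero coordinates. *)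

(* Defs.v *)
From HB Require Import structures.
From mathcomp Require Import all_boot all_order all_algebra.
From mathcomp Require Import all_classical all_reals all_analysis.
Set Implicit Arguments. Unset Strict Implicit. Unset Printing Implicit Defensive.
Import Order.TTheory GRing.Theory Num.Theory.
Local Open Scope ring_scope.

(* Bipartite graph G_A: left vertices 'I_n (columns), right vertices 'I_m (rows),
   edge {u, r} iff A r u != 0. *)

Definition left_nbhd (R : ringType) m n (A : 'M[R]_(m, n)) (u : 'I_n) : {set 'I_m} :=
  [set r | A r u != 0].

Definition right_nbhd (R : ringType) m n (A : 'M[R]_(m, n)) (r : 'I_m) : {set 'I_n} :=
  [set u | A r u != 0].

Definition sign_matrix (R : ringType) m n (A : 'M[R]_(m, n)) : Prop :=
  forall r u, A r u = 0 \/ A r u = 1 \/ A r u = -1.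

Definition left_regular (R : ringType) m n (A : 'M[R]_(m, n)) (t : nat) : Prop :=
  forall u, #|left_nbhd A u| = t.

Definition unique_nbrs (R : ringType) m n (A : 'M[R]_(m, n)) (S : {set 'I_n}) : {set 'I_m} :=
  [set r | #|right_nbhd A r :&: S| == 1%N].

Definition unique_expander (R : realType) m n (A : 'M[R]_(m, n)) (t : nat) (gamma mu : R) : Prop :=
  left_regular A t /\
  forall S : {set 'I_n}, (#|S|%:R <= gamma * n%:R) ->
    t%:R * (1 - mu) * #|S|%:R <= #|unique_nbrs A S|%:R.

Definition smax (R : ringType) m n (A : 'M[R]_(m, n)) : nat :=
  \max_(r : 'I_m) #|right_nbhd A r|.

Definition sparse (R : realType) n (k : R) (x : 'cV[R]_n) : Prop :=
  #|[set i | x i 0 != 0]|%:R <= k.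

Definition lp_pow (R : realType) n (p : R) (x : 'cV[R]_n) : R :=
  \sum_(i < n) (`|x i 0| `^ p).

(* Main.v *)
Require Import Defs.
From HB Require Import structures.
From mathcomp Require Import all_boot all_order all_algebra.
From mathcomp Require Import all_classical all_reals all_analysis.
From mathcomp Require Import ring lra zify.
Import Order.TTheory GRing.Theory Num.Theory.
Local Open Scope ring_scope.

Module Helpers.
Set Implicit Arguments. Unset Strict Implicit.
Section ConvexPart.
Local Open Scope convex_scope.

Lemma conv2 (R : realType) (p l a b : R) : 1 <= p -> 0 <= l -> l <= 1 -> 0 <= a -> 0 <= b ->
  (l * a + (1 - l) * b) `^ p <= l * a `^ p + (1 - l) * b `^ p.
Proof.
move=> p1 l0 l1 a0 b0.
have := (convex_powR p1 (Itv01 l0 l1)) a b.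
rewrite !convRE /=; apply; rewrite inE /= in_itv /= andbT //.
Qed.

Lemma powRV (R : realType) (x p : R) : 0 < x -> (x^-1) `^ p = (x `^ p)^-1.
Proof.
move=> x0; rewrite -powR_inv1 ?ltW // -powRrM mulN1r powRN //.
Qed.

Lemma cvg_gen (R : realType) (p al be a b : R) : 1 <= p -> 0 < al -> 0 < be -> 0 <= a -> 0 <= b ->
  (a + b) `^ p <= (al + be) `^ (p - 1) * (a `^ p / al `^ (p - 1) + b `^ p / be `^ (p - 1)).
Proof.
move=> p1 al0 be0 a0 b0.
have p0 : 0 < p by lra.
set s := al + be. have s0 : 0 < s by rewrite /s; lra.
set l := al / s.
have l0 : 0 <= l by rewrite /l divr_ge0 // ltW.
have l1 : l <= 1 by rewrite /l ler_pdivrMr // mul1r /s; lra.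
have e1 : 1 - l = be / s by rewrite /l /s; field; lra.
have E : a + b = s * (l * (a / al) + (1 - l) * (b / be)).
  rewrite e1 /l; field; lra.
have hc : 0 <= l * (a / al) + (1 - l) * (b / be).
  by rewrite addr_ge0 // mulr_ge0 ?divr_ge0 ?subr_ge0 // ltW.
rewrite E (powRM _ (ltW s0) hc).
have H := conv2 p1 l0 l1 (divr_ge0 a0 (ltW al0)) (divr_ge0 b0 (ltW be0)).
rewrite -(mulr_powRB1 (ltW s0) p0) (mulrC s) -mulrA ler_pM2l ?powR_gt0 //.
apply: (le_trans (ler_wpM2l (ltW s0) H)).
have ia : 0 <= al^-1 by rewrite invr_ge0 ltW.
have ib : 0 <= be^-1 by rewrite invr_ge0 ltW.
rewrite e1 /l (powRM _ a0 ia) (powRM _ b0 ib) !powRV //.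
rewrite -(mulr_powRB1 (ltW al0) p0) -(mulr_powRB1 (ltW be0) p0).
have h1 : 0 < al `^ (p - 1) by apply: powR_gt0.
have h2 : 0 < be `^ (p - 1) by apply: powR_gt0.
rewrite le_eqVlt; apply/orP; left; apply/eqP.
rewrite /s; field; repeat split; lra.
Qed.

End ConvexPart.

Lemma powR_le (R : realType) (p a b : R) : 0 <= p -> 0 <= a -> a <= b -> a `^ p <= b `^ p.
Proof.
move=> p0 a0 ab; apply: ge0_ler_powR => //; rewrite nnegrE //; exact: le_trans ab.
Qed.

Lemma pow_lower (R : realType) (p d a b : R) : 1 <= p -> 0 < d ->
  `|a| `^ p / (1 + d) `^ (p - 1) - `|b| `^ p / d `^ (p - 1) <= `|a + b| `^ p.
Proof.
move=> p1 d0.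
have h : `|a| `^ p <= (1 + d) `^ (p - 1) * (`|a + b| `^ p / 1 `^ (p - 1) + `|b| `^ p / d `^ (p - 1)).
  apply: le_trans (cvg_gen p1 ltr01 d0 (normr_ge0 _) (normr_ge0 _)).
  apply: powR_le; [lra|exact: normr_ge0|].
  by rewrite -{1}(addrK b a); exact: ler_normB.
rewrite powR1 /= divr1 in h.
have h1 : 0 < (1 + d) `^ (p - 1) by apply: powR_gt0; lra.
rewrite lerBlDr ler_pdivrMr // mulrC.
by apply: (le_trans h); rewrite mulrDr.
Qed.

Lemma pow_upper (R : realType) (p d a b : R) : 1 <= p -> 0 < d -> d < 1 ->
  `|a + b| `^ p <= `|a| `^ p / (1 - d) `^ (p - 1) + `|b| `^ p / d `^ (p - 1).
Proof.
move=> p1 d0 d1.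
have h := cvg_gen p1 (_ : 0 < 1 - d) d0 (normr_ge0 a) (normr_ge0 b).
rewrite subrK powR1 /= mul1r in h.
apply: le_trans (h _); first by apply: powR_le; [lra|exact: normr_ge0|exact: ler_normD].
lra.
Qed.

Lemma pmean (R : realType) (p : R) (I : Type) (s : seq I) (y : I -> R) : 1 <= p ->
  `|\sum_(i <- s) y i| `^ p <= (size s)%:R `^ (p - 1) * \sum_(i <- s) `|y i| `^ p.
Proof.
move=> p1; elim: s => [|x s IH].
  by rewrite !big_nil normr0 powR0 ?mulr0 //; apply/eqP; lra.
rewrite !big_cons.
case: s IH => [|z s] IH.
  by rewrite !big_nil addr0 powR1 /= mul1r addr0.
set B := \sum_(i <- z :: s) y i in IH *.
set SB := \sum_(i <- z :: s) `|y i| `^ p in IH *.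
set k := (size (z :: s))%:R in IH *.
have k0 : 0 < k by rewrite /k ltr0n.
have hk : 0 < k `^ (p - 1) by apply: powR_gt0.
have h := cvg_gen p1 ltr01 k0 (normr_ge0 (y x)) (normr_ge0 B).
rewrite powR1 /= divr1 in h.
have e : (size [:: x, z & s])%:R = 1 + k by rewrite /k /= -add1n natrD.
rewrite e.
apply: le_trans (_ : (`|y x| + `|B|) `^ p <= _).
  by apply: powR_le; [lra|exact: normr_ge0|exact: ler_normD].
apply: (le_trans h); rewrite ler_wpM2l ?powR_ge0 // lerD2l.
by rewrite ler_pdivrMr // mulrC.
Qed.

Section Minimal.
Variables (T : eqType) (e : rel T).
Hypothesis irr : forall x, ~~ e x x.
Hypothesis tr : forall x y z, e x y -> e y z -> e x z.

Lemma seq_min (s : seq T) : s != [::] ->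
  exists2 v, v \in s & forall u, u \in s -> ~~ e u v.
Proof.
elim: s => [//|x s IH] _.
case: s IH => [|y s] IH.
  exists x; first by rewrite inE.
  by move=> u; rewrite inE => /eqP ->.
have [v vs vmin] := IH isT.
case exv: (e x v).
  exists x; first by rewrite inE eqxx.
  move=> u; rewrite inE => /orP[/eqP -> //|us].
  apply/negP => eux; have := vmin u us; by rewrite (tr eux exv).
exists v; first by rewrite inE vs orbT.
move=> u; rewrite inE => /orP[/eqP -> //|us]; first by rewrite exv.
exact: vmin.
Qed.
End Minimal.

Section Comb.
Variables (R : realType) (m n : nat) (A : 'M[R]_(m, n)) (key : 'I_n -> R).

Definition lto (u v : 'I_n) : bool := (key u < key v) || ((key u == key v) && (u < v)%N).

Lemma lto_irr u : ~~ lto u u.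
Proof. by rewrite /lto ltxx eqxx ltnn. Qed.

Lemma lto_tr u v w : lto u v -> lto v w -> lto u w.
Proof.
rewrite /lto => /orP[h1|/andP[/eqP e1 h1]] /orP[h2|/andP[/eqP e2 h2]].
- by rewrite (lt_trans h1 h2).
- by rewrite -e2 h1.
- by rewrite e1 h2.
- by rewrite e1 e2 eqxx (ltn_trans h1 h2) orbT.
Qed.

Lemma lto_total u v : u != v -> lto u v || lto v u.
Proof.
move=> uv; rewrite /lto; case: (ltgtP (key u) (key v)) => //= e.
case: (ltngtP u v) => // h.
by move: uv; rewrite (val_inj h) eqxx.
Qed.

Lemma set_min (T : {set 'I_n}) : T != finset.set0 ->
  exists2 v, v \in T & forall u, u \in T -> ~~ lto u v.
Proof.
case/set0Pn => x xT.
have [|v vs vm] := @seq_min _ lto lto_irr lto_tr (enum T).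
  by apply/eqP => h; have := mem_enum T x; rewrite h xT.
exists v; first by rewrite -mem_enum.
by move=> u uT; apply: vm; rewrite mem_enum.
Qed.

Lemma set_max (T : {set 'I_n}) : T != finset.set0 ->
  exists2 v, v \in T & forall u, u \in T -> ~~ lto v u.
Proof.
case/set0Pn => x xT.
have [|v vs vm] := @seq_min _ (fun a b => lto b a) lto_irr
   (fun a b c h1 h2 => lto_tr h2 h1) (enum T).
  by apply/eqP => h; have := mem_enum T x; rewrite h xT.
exists v; first by rewrite -mem_enum.
by move=> u uT; apply: vm; rewrite mem_enum.
Qed.

Definition domr (T : {set 'I_n}) (r : 'I_m) (u : 'I_n) : bool :=
  [exists v in right_nbhd A r :&: T, lto u v].

Definition cnt (T : {set 'I_n}) (u : 'I_n) : nat :=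
  #|[set r in left_nbhd A u | domr T r u]|.

Variable (t : nat) (mu : R).
Hypothesis lreg : left_regular A t.

Lemma cnt_nat (T : {set 'I_n}) :
  (\sum_(u in T) cnt T u + #|unique_nbrs A T| <= t * #|T|)%N.
Proof.
set U := unique_nbrs A T.
have h1 : forall u, u \in T ->
    (cnt T u + #|[set r in left_nbhd A u | r \in U]| <= t)%N.
  move=> u uT; rewrite /cnt -cardsUI.
  have -> : [set r in left_nbhd A u | domr T r u] :&: [set r in left_nbhd A u | r \in U] = finset.set0.
    apply/setP => r; rewrite !inE.
    apply/negP => /andP[/andP[Aru /existsP[v /andP[vN luv]]] /andP[_ rU]].
    move: rU => /cards1P[z hz].
    have : u \in right_nbhd A r :&: T by rewrite /right_nbhd !inE Aru uT.
    rewrite hz inE => /eqP eu.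
    move: vN; rewrite hz inE => /eqP ev.
    by move: luv; rewrite eu ev (negbTE (lto_irr z)).
  rewrite cards0 addn0 -(lreg u); apply: subset_leq_card.
  by apply/fintype.subsetP => r; rewrite !inE => /orP[/andP[->]|/andP[->]].
have h2 : (\sum_(u in T) #|[set r in left_nbhd A u | r \in U]| = #|U|)%N.
  transitivity (\sum_(u in T) \sum_(r | (r \in U) && (A r u != 0%R)) 1)%N.
    apply: eq_bigr => u _; rewrite -sum1_card; apply: eq_bigl => r.
    by rewrite !inE andbC.
  rewrite (exchange_big_dep (fun r => r \in U)) /=; last by move=> u r _ /andP[].
  rewrite -sum1_card; apply: eq_bigr => r rU.
  move: (rU); rewrite inE => /eqP c1.
  rewrite -[RHS]c1 -sum1_card; apply: eq_bigl => u.
  by rewrite sum1_card c1 /right_nbhd !inE andbC.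
rewrite -h2 -big_split /= mulnC -sum_nat_const.
by apply: leq_sum => u uT; exact: h1.
Qed.

Lemma cnt_real (T : {set 'I_n}) :
  t%:R * (1 - mu) * #|T|%:R <= #|unique_nbrs A T|%:R ->
  \sum_(u in T) (cnt T u)%:R <= mu * t%:R * #|T|%:R.
Proof.
move=> h; have := cnt_nat T; rewrite -(ler_nat R) natrD natrM -natr_sum => h'.
have e : mu * t%:R * #|T|%:R = t%:R * #|T|%:R - t%:R * (1 - mu) * #|T|%:R by ring.
rewrite e; lra.
Qed.

Lemma cnt_rm (T : {set 'I_n}) v u : (forall u, u \in T -> ~~ lto u v) ->
  u \in T :\ v -> cnt T u = cnt (T :\ v) u.
Proof.
move=> vm; rewrite !inE => /andP[uv uT]; rewrite /cnt.
apply: eq_card => r; rewrite !inE; congr (_ && _).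
apply/existsP/existsP => [[z /andP[zN luz]]|[z /andP[zN luz]]]; exists z.
- move: zN; rewrite !inE => /andP[-> zT]; rewrite zT luz andbT /= andbT.
  by apply/eqP => ez; move: (vm u uT); rewrite -ez luz.
- by move: zN; rewrite !inE => /andP[-> /andP[_ ->]]; rewrite luz.
Qed.

Lemma keyK : forall k (T : {set 'I_n}), (#|T| <= k)%N ->
  (forall T' : {set 'I_n}, T' \subset T -> t%:R * (1 - mu) * #|T'|%:R <= #|unique_nbrs A T'|%:R) ->
  forall w : 'I_n -> R, (forall u, u \in T -> 0 <= w u) ->
  (forall u v, u \in T -> v \in T -> lto u v -> w u <= w v) ->
  \sum_(u in T) (cnt T u)%:R * w u <= mu * t%:R * \sum_(u in T) w u.
Proof.
elim=> [|k IH] T hk hexp w w0 wm.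
  have -> : T = finset.set0 by apply: cards0_eq; lia.
  by rewrite !big_set0 mulr0.
have [->|Tn0] := eqVneq T finset.set0; first by rewrite !big_set0 mulr0.
have [v vT vm] := set_min Tn0.
have hC := cnt_real (hexp T (fintype.subxx _)).
rewrite (big_setD1 v vT) /= in hC.
rewrite (big_setD1 v vT) /= (big_setD1 v vT) /=.
rewrite (eq_bigr (fun u => (cnt (T :\ v) u)%:R * w u)); last first.
  by move=> u uT; rewrite (cnt_rm vm uT).
rewrite (eq_bigr (fun u => (cnt (T :\ v) u)%:R)) in hC; last first.
  by move=> u uT; rewrite (cnt_rm vm uT).
have hk' : (#|T :\ v| <= k)%N by move: hk; rewrite (cardsD1 v T) vT; lia.
have hT : #|T|%:R = #|T :\ v|%:R + 1 :> R.
  by rewrite (cardsD1 v T) vT natrD addrC.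
rewrite hT in hC.
have hI := IH (T :\ v) hk' 
  (fun T' h => hexp T' (fintype.subset_trans h (subsetDl _ _)))
  (fun u => w u - w v).
have wv0 := w0 v vT.
have hI' : \sum_(u in T :\ v) (cnt (T :\ v) u)%:R * (w u - w v) <=
       mu * t%:R * \sum_(u in T :\ v) (w u - w v).
  apply: hI.
  - move=> u; rewrite !inE => /andP[uv uT]; rewrite subr_ge0.
    have := lto_total uv; rewrite (negbTE (vm u uT)) /= => lvu.
    exact: wm.
  - move=> u u' /setD1P[_ uT] /setD1P[_ u'T] h; rewrite lerD2r; exact: wm.
move: hI'; rewrite !sumrB (eq_bigr (fun u => (cnt (T :\ v) u)%:R * w u - (cnt (T :\ v) u)%:R * w v)); last by move=> u _; rewrite mulrBr.
rewrite sumrB -mulr_suml sumr_const => hI'.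
set a := (cnt T v)%:R in hC *.
set C' := \sum_(i in T :\ v) (cnt (T :\ v) i)%:R in hC hI' *.
set Sw := \sum_(i in T :\ v) w i in hI' *.
set Scw := \sum_(i in T :\ v) (cnt (T :\ v) i)%:R * w i in hI' *.
set M := mu * t%:R in hC hI' *.
rewrite -mulr_natr in hI'.
set k' := #|T :\ v|%:R in hC hI' *.
have h3 : w v * (a + C') <= w v * (M * (k' + 1)) by apply: ler_wpM2l.
nra.
Qed.

End Comb.

End Helpers.
Import Helpers.

Theorem lemma6p1 (R : realType) (m n t : nat) (gamma mu : R) (A : 'M[R]_(m, n)) :
  sign_matrix A ->
  unique_expander A t gamma mu ->
  forall (p d1 d2 : R), 1 <= p -> 0 < d1 -> 0 < d2 < 1 ->
  forall x : 'cV[R]_n, sparse (gamma * n%:R) x ->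
    ((t%:R * (1 - mu) / ((1 + d1) `^ (p - 1))
       - mu * t%:R / (d1 `^ (p - 1)) * ((smax A).-1%:R `^ (p - 1))) * lp_pow p x
       <= lp_pow p (A *m x))
    /\
    (lp_pow p (A *m x)
       <= (t%:R / ((1 - d2) `^ (p - 1))
           + mu * t%:R / (d2 `^ (p - 1)) * ((smax A).-1%:R `^ (p - 1))) * lp_pow p x).
Proof.
move=> sgn [lreg hexp] p d1 d2 p1 d10 /andP[d20 d21] x hsp.
pose S := [set u | x u 0 != 0].
pose key := fun u => `|x u 0|.
pose W := fun u => `|x u 0| `^ p.
pose K := (smax A).-1%:R `^ (p - 1).
have pn0 : p != 0 by apply/eqP; lra.
have W0 : forall u, u \notin S -> W u = 0.
  move=> u; rewrite /S inE negbK => /eqP h; by rewrite /W h normr0 powR0.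
have Wge0 : forall u, 0 <= W u by move=> u; exact: powR_ge0.
have K0 : 0 <= K by exact: powR_ge0.
have hexpS : forall T' : {set 'I_n}, T' \subset S ->
    t%:R * (1 - mu) * #|T'|%:R <= #|unique_nbrs A T'|%:R.
  move=> T' hT; apply: hexp; apply: le_trans hsp.
  by rewrite ler_nat; apply: subset_leq_card.
have HK := keyK (key:=key) lreg (leqnn #|S|) hexpS (w:=W) (fun u _ => Wge0 u).
have {}HK : \sum_(u in S) (cnt A key S u)%:R * W u <= mu * t%:R * \sum_(u in S) W u.
  apply: HK => u v _ _ /orP[h|/andP[/eqP h _]].
    by apply: powR_le; [lra|exact: normr_ge0|exact: ltW].
  by rewrite /W -/(key u) h.
pose N := fun r => right_nbhd A r :&: S.
pose Lr := fun r => [set u in N r | ~~ domr A key S r u].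
pose Dr := fun r => [set u in N r | domr A key S r u].
have hrow : forall r, exists a b : R, (A *m x) r 0 = a + b /\
    `|a| `^ p = \sum_(u in Lr r) W u /\ `|b| `^ p <= K * \sum_(u in Dr r) W u.
  move=> r.
  have hAx : (A *m x) r 0 = \sum_(j in N r) A r j * x j 0.
    rewrite mxE (bigID (fun j => j \in N r)) /= [Y in _ + Y]big1 ?addr0 //.
    move=> j hj; have : (A r j == 0) || (x j 0 == 0).
      by move: hj; rewrite /N /right_nbhd /S !inE negb_and !negbK.
    by case/orP => /eqP ->; rewrite ?mul0r ?mulr0.
  have [hN|hN] := eqVneq (N r) finset.set0.
    have hu : forall u, (u \in N r) = false by move=> u; rewrite hN inE.
    exists 0, 0; rewrite add0r normr0 powR0 // hAx hN big_set0; split => //.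
    by rewrite !big_pred0 ?mulr0 // => u /=; rewrite ?/Dr ?/Lr finset.in_set hu.
  have [l lN lm] := set_max key hN.
  have ldom : ~~ domr A key S r l.
    by apply/existsP => -[v /andP[vN lv]]; move: (lm v vN); rewrite lv.
  have hD : Dr r = N r :\ l.
    apply/finset.setP => u; rewrite /Dr finset.in_set in_setD1.
    case uN: (u \in N r); rewrite ?andbF //= andbT.
    apply/idP/idP => [hd|ul].
      by apply/eqP => ul; move: hd; rewrite ul (negbTE ldom).
    have := lto_total key ul; rewrite (negbTE (lm u uN)) orbF => h.
    by apply/existsP; exists l; rewrite lN h.
  have hL : Lr r = [set l].
    apply/finset.setP => u; rewrite /Lr finset.in_set finset.in_set1.
    case uN: (u \in N r); last first.
      by apply/esym/negbTE; apply/eqP => ul; move: uN; rewrite ul lN.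
    have := hD; move/finset.setP => /(_ u); rewrite /Dr finset.in_set in_setD1 uN /= andbT => hh. by rewrite hh negbK.
  exists (A r l * x l 0), (\sum_(u in Dr r) A r u * x u 0).
  have Arl : `|A r l| = 1.
    have : A r l != 0 by move: lN; rewrite /N /right_nbhd !inE => /andP[].
    by case: (sgn r l) => [->|[->|->]]; rewrite ?eqxx ?normrN ?normr1.
  split; [|split].
  - by rewrite hAx (big_setD1 l lN) /= hD.
  - by rewrite hL big_set1 normrM Arl mul1r.
  - rewrite -big_enum /=.
    apply: le_trans (pmean _ _ p1) _.
    rewrite -cardE big_enum /=.
    have -> : \sum_(i in Dr r) `|A r i * x i 0| `^ p = \sum_(i in Dr r) W i.
      apply: eq_bigr => u; rewrite hD in_setD1 /N /right_nbhd !inE => /andP[_ /andP[hA _]].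
      have : `|A r u| = 1.
        by case: (sgn r u) hA => [->|[->|->]]; rewrite ?eqxx ?normrN ?normr1.
      by rewrite normrM => ->; rewrite mul1r.
    apply: ler_wpM2r; first by apply: sumr_ge0 => u _.
    apply: powR_le; [lra|exact: ler0n|].
    rewrite ler_nat hD.
    have := cardsD1 l (N r); rewrite lN add1n => hc.
    have h1 : (#|N r| <= smax A)%N.
      have hm := @leq_bigmax _ (fun r0 : 'I_m => #|right_nbhd A r0|) r.
      apply: leq_trans hm.
      by apply: subset_leq_card; rewrite /N subsetIl.
    by rewrite hc in h1; move: h1; case: (smax A).
have hsw : forall X : 'I_m -> {set 'I_n},
    \sum_(r < m) \sum_(u in X r) W u = \sum_(u < n) #|[set r | u \in X r]|%:R * W u.
  move=> X; rewrite (exchange_big_dep xpredT) //=.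
  apply: eq_bigr => u _.
  rewrite (eq_bigl (fun r => r \in [set r | u \in X r])); last by move=> r; rewrite inE.
  by rewrite sumr_const mulr_natl.
pose P := \sum_(u < n) #|[set r | u \in Lr r]|%:R * W u.
pose Q := \sum_(u < n) #|[set r | u \in Dr r]|%:R * W u.
pose X := lp_pow p x.
have hcD : forall u, u \in S -> #|[set r | u \in Dr r]| = cnt A key S u.
  move=> u uS; rewrite /cnt; apply: eq_card => r.
  rewrite !inE.
  by move: uS; rewrite /S inE => ->; rewrite andbT.
have hcL : forall u, u \in S -> (#|[set r | u \in Lr r]| + cnt A key S u = t)%N.
  move=> u uS; rewrite -(lreg u) -(cardsID [set r | domr A key S r u] (left_nbhd A u)) addnC.
  rewrite /cnt; congr (_ + _); apply: eq_card => r;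
  rewrite !inE //; move: uS; rewrite /S inE => ->; by rewrite andbT andbC.
have hQ : Q = \sum_(u in S) (cnt A key S u)%:R * W u.
  rewrite /Q (bigID (fun u => u \in S)) /= [Y in _ + Y]big1 ?addr0.
    by apply: eq_bigr => u uS; rewrite hcD.
  by move=> u uS; rewrite W0 ?mulr0.
have hX : X = \sum_(u in S) W u.
  rewrite /X /lp_pow (bigID (fun u => u \in S)) /= [Y in _ + Y]big1 ?addr0 //.
have hPQ : P + Q = t%:R * X.
  rewrite /P /Q -big_split /= /X /lp_pow mulr_sumr; apply: eq_bigr => u _.
  rewrite -/(W u) -mulrDl -natrD.
  case uS: (u \in S); first by rewrite hcD // hcL.
  by rewrite W0 ?uS // !mulr0.
have Q0 : 0 <= Q by rewrite /Q; apply: sumr_ge0 => u _; apply: mulr_ge0.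
have QX : Q <= mu * t%:R * X by rewrite hQ hX.
have X0 : 0 <= X by rewrite /X /lp_pow; apply: sumr_ge0 => u _; exact: powR_ge0.
have hAx : lp_pow p (A *m x) = \sum_(r < m) `|(A *m x) r 0| `^ p by [].
have al0 : 0 < (1 + d1) `^ (p - 1) by apply: powR_gt0; lra.
have be0 : 0 < d1 `^ (p - 1) by apply: powR_gt0.
have ga0 : 0 < (1 - d2) `^ (p - 1) by apply: powR_gt0; lra.
have de0 : 0 < d2 `^ (p - 1) by apply: powR_gt0.
split.
- have hl : forall r, (\sum_(u in Lr r) W u) / (1 + d1) `^ (p - 1)
      - K * (\sum_(u in Dr r) W u) / d1 `^ (p - 1) <= `|(A *m x) r 0| `^ p.
    move=> r; have [a [b [-> [ha hb]]]] := hrow r.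
    apply: le_trans (pow_lower a b p1 d10); rewrite -ha lerD2l lerN2.
    by rewrite ler_pM2r ?invr_gt0.
  rewrite hAx; apply: le_trans (ler_sum _ (fun r _ => hl r)).
  rewrite sumrB -!mulr_suml -mulr_sumr !hsw -/P -/Q.
  set ia := ((1 + d1) `^ (p - 1))^-1.
  set ib := (d1 `^ (p - 1))^-1.
  have ia0 : 0 < ia by rewrite invr_gt0.
  have ib0 : 0 < ib by rewrite invr_gt0.
  have eP : P = t%:R * X - Q by rewrite -hPQ addrK.
  rewrite eP.
  have h : 0 <= (mu * t%:R * X - Q) * (ia + K * ib).
    by apply: mulr_ge0; [rewrite subr_ge0|apply: addr_ge0; [exact: ltW|apply: mulr_ge0 => //; exact: ltW]].
  have -> : (t%:R * (1 - mu) * ia - mu * t%:R * ib * K) * X =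
     (t%:R * X - mu * t%:R * X) * ia - K * (mu * t%:R * X) * ib by ring.
  nra.
- have hu : forall r, `|(A *m x) r 0| `^ p <= (\sum_(u in Lr r) W u) / (1 - d2) `^ (p - 1)
      + K * (\sum_(u in Dr r) W u) / d2 `^ (p - 1).
    move=> r; have [a [b [-> [ha hb]]]] := hrow r.
    apply: le_trans (pow_upper a b p1 d20 d21) _; rewrite -ha lerD2l.
    by rewrite ler_pM2r ?invr_gt0.
  rewrite hAx; apply: le_trans (ler_sum _ (fun r _ => hu r)) _.
  rewrite big_split /= -!mulr_suml -mulr_sumr !hsw -/P -/Q.
  set ia := ((1 - d2) `^ (p - 1))^-1.
  set ib := (d2 `^ (p - 1))^-1.
  have ia0 : 0 < ia by rewrite invr_gt0.
  have ib0 : 0 < ib by rewrite invr_gt0.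
  have eP : P = t%:R * X - Q by rewrite -hPQ addrK.
  rewrite eP.
  have h1 : 0 <= Q * ia by apply: mulr_ge0 => //; exact: ltW.
  have h2 : K * Q * ib <= K * (mu * t%:R * X) * ib.
    by rewrite ler_pM2r // ler_wpM2l.
  have -> : (t%:R * ia + mu * t%:R * ib * K) * X =
     t%:R * X * ia + K * (mu * t%:R * X) * ib by ring.
  nra.
Qed.
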